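(* Let $X$ be a path-connected topological space, $Y\subset X$, $G$ a group, and $\mathcal{U}$ an open covering of $X$. Then the restriction map $Z^1(X,Y)\to Z^1_{\mathcal{U}}(X,Y)$ (restricting a cocycle from $P(X)$ to the set $P_{\mathcal{U}}(X)$ of short paths) is a bijection, and the induced map $H^1(X,Y)\to H^1_{\mathcal{U}}(X,Y)$ is a bijection.
   Context: Conventions: $I=[0,1]$; a path in $W$ is a continuous map $I\to W$; $P(W)$ is the set of all paths. For $p(1)=q(0)$, $p\cdot q$ is concatenation. Homotopies of paths are relative to $\{0,1\}$; $p\sim q$ means homotopic. $G$ has unit $1$. A $0$-cochain of $(X,Y)$ is a map $c\colon X\to G$ with $c|_Y=1$; they form a group $C^0(X,Y)$ under pointwise multiplication. A $1$-cochain is a map $u\colon P(X)\to G$ with $u(p)=1$ for paths $p$ with image in $Y$; a cocycle additionally satisfies $u(p)=u(q)$ if $p\sim q$ and $u(p\cdot q)=u(p)u(q)$ when $p\cdot q$ is defined; $Z^1(X,Y)$ is the set of cocycles; $C^0(X,Y)$ acts by $(c\bullet u)(p)=c(p(0))u(p)c(p(1))^{-1}$, and $H^1(X,Y)$ is the orbit set. Short versions: a path $p$ is short if $p(I)\subset U$ for some $U\in\mathcal{U}$; a homotopy $I\times[0,1]\to X$ is short if its image lies in some $U\in\mathcal{U}$. $P_{\mathcal{U}}(X)$ is the set of short paths. A short $1$-cochain is a map $u\colon P_{\mathcal{U}}(X)\to G$ with $u(p)=1$ for short paths $p$ with image in $Y$. It is a short cocycle if $u(p)=u(q)$ whenever there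 is a short homotopy relative to $\{0,1\}$ between $p$ and $q$, and $u(p\cdot q)=u(p)u(q)$ whenever $p\cdot q$ is defined and short. $Z^1_{\mathcal{U}}(X,Y)$ is the set of short cocycles; $C^0(X,Y)$ acts on it by the same formula, and $H^1_{\mathcal{U}}(X,Y)$ is the set of orbits. *)

(* Defs.v *)
From HB Require Import structures.
From mathcomp Require Import monoid.
From mathcomp Require Import all_boot all_order all_algebra.
From mathcomp Require Import all_classical all_reals topology subtype_topology.
From mathcomp Require Import Rstruct Rstruct_topology.

Set Implicit Arguments.
Unset Strict Implicit.
Unset Printing Implicit Defensive.

Local Open Scope classical_set_scope.
Local Open Scope ring_scope.
Import Order.TTheory GRing.Theory Num.Theory.

Definition unitI : Type := set_type (`[0%R, 1%R]%classic : set Rdefinitions.R).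

Lemma unitI0_mem : (0%R : Rdefinitions.R) \in (`[0%R, 1%R]%classic : set Rdefinitions.R).
Proof. by apply/mem_set; rewrite /= in_itv /= lexx ler01. Qed.

Lemma unitI1_mem : (1%R : Rdefinitions.R) \in (`[0%R, 1%R]%classic : set Rdefinitions.R).
Proof. by apply/mem_set; rewrite /= in_itv /= lexx ler01. Qed.

Definition I0 : unitI := exist _ 0%R unitI0_mem.
Definition I1 : unitI := exist _ 1%R unitI1_mem.

Record tpath (X : topologicalType) := Path {
  pfun :> unitI -> X;
  pcont : continuous pfun }.

(** r is the concatenation p . q :
    r(t) = p(2t) for t in [0,1/2], r(t) = q(2t-1) for t in [1/2,1]. *)
Definition is_concat (X : topologicalType) (p q r : tpath X) : Prop :=
  forall t s : unitI,
    (sval s = 2 * sval t -> r t = p s) /\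
    (sval s = 2 * sval t - 1 -> r t = q s).

Definition is_rel_homotopy (X : topologicalType) (p q : tpath X)
    (H : unitI * unitI -> X) : Prop :=
  [/\ continuous H,
      (forall s, H (s, I0) = p s),
      (forall s, H (s, I1) = q s) &
      (forall t, H (I0, t) = p I0 /\ H (I1, t) = p I1)].

Definition homotopic (X : topologicalType) (p q : tpath X) : Prop :=
  exists H, is_rel_homotopy p q H.

Definition open_cover (X : topologicalType) (cov : set (set X)) : Prop :=
  (forall U, cov U -> open U) /\ (forall x : X, exists U, cov U /\ U x).

Definition short_path (X : topologicalType) (cov : set (set X)) (p : tpath X) :=
  exists U, cov U /\ (forall t, U (p t)).

Definition short_homotopic (X : topologicalType) (cov : set (set X))
    (p q : tpath X) : Prop :=
  exists H, is_rel_homotopy p q H /\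
    exists U, cov U /\ (forall z, U (H z)).

Definition spath (X : topologicalType) (cov : set (set X)) : Type :=
  {p : tpath X | short_path cov p}.

Definition path_connected (X : topologicalType) : Prop :=
  forall x y : X, exists p : tpath X, p I0 = x /\ p I1 = y.

Definition cochain0 (X : topologicalType) (Y : set X) (G : groupType)
    (c : X -> G) : Prop :=
  forall y, Y y -> c y = 1%g.

Definition cocycle (X : topologicalType) (Y : set X) (G : groupType)
    (u : tpath X -> G) : Prop :=
  [/\ (forall p : tpath X, (forall t, Y (p t)) -> u p = 1%g),
      (forall p q : tpath X, homotopic p q -> u p = u q) &
      (forall p q r : tpath X, p I1 = q I0 -> is_concat p q r ->
          u r = (u p * u q)%g)].

Definition short_cocycle (X : topologicalType) (cov : set (set X)) (Y : set X)
    (G : groupType) (u : spath cov -> G) : Prop :=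
  [/\ (forall p : spath cov, (forall t, Y (sval p t)) -> u p = 1%g),
      (forall p q : spath cov, short_homotopic cov (sval p) (sval q) -> u p = u q) &
      (forall p q r : spath cov, sval p I1 = sval q I0 ->
          is_concat (sval p) (sval q) (sval r) -> u r = (u p * u q)%g)].

Definition act0 (X : topologicalType) (G : groupType) (c : X -> G)
    (u : tpath X -> G) : tpath X -> G :=
  fun p => (c (p I0) * u p * (c (p I1))^-1)%g.

Definition act0_short (X : topologicalType) (cov : set (set X)) (G : groupType)
    (c : X -> G) (u : spath cov -> G) : spath cov -> G :=
  fun p => (c (sval p I0) * u p * (c (sval p I1))^-1)%g.

(** Same orbit (same class in H^1, resp. H^1_U). *)
Definition cohomologous (X : topologicalType) (Y : set X) (G : groupType)
    (u v : tpath X -> G) : Prop :=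
  exists c, cochain0 Y c /\ v = act0 c u.

Definition short_cohomologous (X : topologicalType) (cov : set (set X))
    (Y : set X) (G : groupType) (u v : spath cov -> G) : Prop :=
  exists c, cochain0 Y c /\ v = act0_short c u.

Definition restr_short (X : topologicalType) (cov : set (set X)) (G : groupType)
    (u : tpath X -> G) : spath cov -> G :=
  fun p => u (sval p).
Arguments restr_short [X] cov [G] u _.

(* Main.v *)
Require Import Defs.
From HB Require Import structures.
From mathcomp Require Import monoid.
From mathcomp Require Import all_boot all_order all_algebra.
From mathcomp Require Import all_classical all_reals topology subtype_topology.
From mathcomp Require Import Rstruct Rstruct_topology.


From mathcomp Require Import normedtype ring lra.
Import Order.TTheory GRing.Theory Num.Theory.
Set Implicit Arguments.
Unset Strict Implicit.
Unset Printing Implicit Defensive.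

Section Cont.
Local Open Scope classical_set_scope.
Local Open Scope ring_scope.
Notation R := Rdefinitions.R.

Lemma cont_add (T : topologicalType) (f g : T -> R) :
  continuous f -> continuous g -> continuous (fun x => f x + g x).
Proof. move=> cf cg x. exact (@cvgD R R^o _ (nbhs x) _ f g _ _ (cf x) (cg x)). Qed.

Lemma cont_mul (T : topologicalType) (f g : T -> R) :
  continuous f -> continuous g -> continuous (fun x => f x * g x).
Proof. move=> cf cg x. exact (@cvgM R _ (nbhs x) _ f g _ _ (cf x) (cg x)). Qed.

Lemma cont_opp (T : topologicalType) (f : T -> R) :
  continuous f -> continuous (fun x => - f x).
Proof. move=> cf x. exact (@cvgN R R^o _ (nbhs x) _ f _ (cf x)). Qed.

Lemma cont_const (T U : topologicalType) (c : U) : continuous (fun _ : T => c).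
Proof. by move=> x; exact: cvg_cst. Qed.

Lemma cont_pair (T U V : topologicalType) (f : T -> U) (g : T -> V) :
  continuous f -> continuous g -> continuous (fun x => (f x, g x)).
Proof. by move=> cf cg x; exact: (cvg_pair (cf x) (cg x)). Qed.

Lemma cont_fst (U V : topologicalType) : continuous (@fst U V).
Proof. by move=> x; exact: cvg_fst. Qed.

Lemma cont_snd (U V : topologicalType) : continuous (@snd U V).
Proof. by move=> x; exact: cvg_snd. Qed.

Lemma cont_comp (T U V : topologicalType) (f : T -> U) (g : U -> V) :
  continuous f -> continuous g -> continuous (fun x => g (f x)).
Proof. by move=> cf cg x; apply: continuous_comp; [exact: cf|exact: cg]. Qed.

Lemma cont_sval : continuous (fun t : unitI => sval t).
Proof. exact: (@initial_continuous _ _ set_val). Qed.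

Definition clampR (x : R) : R := Num.min (Num.max x 0) 1.

Lemma clampR_in x : 0 <= clampR x <= 1.
Proof.
rewrite /clampR; apply/andP; split.
  by rewrite le_min ler01 le_max lexx orbT.
by rewrite ge_min lexx orbT.
Qed.

Lemma clampR_id x : 0 <= x <= 1 -> clampR x = x.
Proof.
case/andP=> h0 h1; rewrite /clampR.
have -> : Num.max x 0 = x by rewrite max_l.
by rewrite min_l.
Qed.

Lemma clampR_mem x : clampR x \in (`[0%R, 1%R]%classic : set R).
Proof. by apply/mem_set; rewrite /= in_itv /= clampR_in. Qed.

Definition clamp (x : R) : unitI := exist _ (clampR x) (clampR_mem x).

Lemma cont_clampR : continuous clampR.
Proof.
move=> x.
have := @continuous_min R R (fun x : R => Num.max x 0) (fun=> 1) x.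
have := @continuous_max R R (fun x : R => x) (fun=> 0) x.
move=> h1 h2. apply: h2.
  apply: h1. by apply: cvg_id. by apply: cvg_cst.
by apply: cvg_cst.
Qed.

Lemma cont_clamp : continuous clamp.
Proof.
apply: (@continuous_comp_initial _ _ _ set_val).
exact: cont_clampR.
Qed.

Lemma clamp_sval (t : unitI) : clamp (sval t) = t.
Proof.
case: t => x hx; apply: eq_exist => /=.
apply: clampR_id; move/set_mem: hx; rewrite /= in_itv /=; done.
Qed.

Lemma unitI_in (t : unitI) : 0 <= sval t <= 1.
Proof. by case: t => x hx; move/set_mem: (hx); rewrite /= in_itv. Qed.

Lemma ballRR (x y : R*R) e : ball x e y <-> ball x.1 e y.1 /\ ball x.2 e y.2.
Proof. done. Qed.
Lemma ballR (x y e : R) : ball x e y <-> `|x - y| < e.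
Proof. done. Qed.

Lemma natinv (e : R) : 0 < e -> exists N : nat, N.+1%:R^-1 < e.
Proof.
move=> e0; exists (Num.trunc e^-1).
rewrite invf_plt ?posrE ?ltr0Sn //.
exact: truncnS_gt.
Qed.

Lemma lebesgue (X : topologicalType) (cov : set (set X)) (Phi : R * R -> X) :
  continuous Phi -> open_cover cov ->
  exists N : nat, forall z : R * R, (`[0%R, 1%R] `*` `[0%R, 1%R]) z ->
    exists U, cov U /\ forall z', ball z (N.+1%:R^-1) z' -> U (Phi z').
Proof.
move=> cPhi [covo covc].
have cK : compact (`[0%R, 1%R] `*` `[0%R, 1%R] : set (R * R)).
  by apply: compact_setX; exact: segment_compact.
move/compact_near_coveringP: cK => cK.
have := cK nat \oo (fun n z => exists U, cov U /\ forall z', ball z (n.+1%:R^-1) z' -> U (Phi z')) _.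
case.
- move=> x Kx.
  have [U [cU Ux]] := covc (Phi x).
  have nU : nbhs (Phi x) U by apply: open_nbhs_nbhs; split => //; exact: covo.
  have := cPhi x _ nU; rewrite /= nbhs_simpl => /nbhs_ballP [e /= e0 heU].
  have e20 : 0 < e / 2 by rewrite divr_gt0.
  have [N hN] : exists N : nat, N.+1%:R^-1 < e / 2.
    exact: natinv.
  exists (ball x (e / 2), [set n | (N <= n)%N]).
    split => /=; first exact: nbhsx_ballx.
    by exists N.
  case=> x' n /= [bx' hn]; exists U; split => // z' bz'.
  apply: heU.
  have : ball x (e / 2 + n.+1%:R^-1) z' by apply: ball_triangle bx' bz'.
  apply: le_ball.
  have : n.+1%:R^-1 <= N.+1%:R^-1 :> R.
    by rewrite lef_pV2 ?posrE ?ltr0Sn // ler_nat.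
  move: hN; set a := (N.+1%:R^-1 : R); set b := (n.+1%:R^-1 : R) => hN hab.
  lra.
- move=> N _ HN; exists N => z Kz; exact: (HN N (leqnn N) z Kz).
Qed.

End Cont.


Section Paths.
Local Open Scope classical_set_scope.
Local Open Scope ring_scope.
Notation R := Rdefinitions.R.
Context (X : topologicalType).

Lemma tpath_ext (p q : tpath X) : (forall t, p t = q t) -> p = q.
Proof.
case: p => f hf; case: q => g hg /= e.
have ef : f = g by apply: funext.
subst g; congr Path; exact: Prop_irrelevance.
Qed.

Definition lerp (A B : R * R) (l : R) : R * R :=
  (A.1 + l * (B.1 - A.1), A.2 + l * (B.2 - A.2)).

Lemma cont_lerp3 (T : topologicalType) (f g : T -> R * R) (h : T -> R) :
  continuous f -> continuous g -> continuous h ->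
  continuous (fun z => lerp (f z) (g z) (h z)).
Proof.
move=> cf cg ch; rewrite /lerp.
have c1 : continuous (fun z => (f z).1) by apply: cont_comp cf (@cont_fst _ _).
have c2 : continuous (fun z => (f z).2) by apply: cont_comp cf (@cont_snd _ _).
have d1 : continuous (fun z => (g z).1) by apply: cont_comp cg (@cont_fst _ _).
have d2 : continuous (fun z => (g z).2) by apply: cont_comp cg (@cont_snd _ _).
apply: cont_pair; apply: cont_add => //; apply: cont_mul => //;
  apply: cont_add => //; exact: cont_opp.
Qed.

Lemma cont_lerp (A B : R * R) : continuous (lerp A B).
Proof.
apply: (@cont_lerp3 _ (fun=> A) (fun=> B) id); try exact: cont_const.
by move=> x; exact: cvg_id.
Qed.

Lemma PP_cont (Phi : R * R -> X) (g : R -> R * R) :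
  continuous Phi -> continuous g -> continuous (fun t : unitI => Phi (g (sval t))).
Proof.
move=> cP cg; apply: cont_comp cP; apply: cont_comp cg; exact: cont_sval.
Qed.

Definition PP (Phi : R * R -> X) (hP : continuous Phi) (g : R -> R * R)
  (hg : continuous g) : tpath X := Path (PP_cont hP hg).

Definition seg (Phi : R * R -> X) (hP : continuous Phi) A B := PP hP (@cont_lerp A B).

Definition gamma2 (A B C : R * R) (s : R) : R * R :=
  (A.1 + clampR (2 * s) * (B.1 - A.1) + clampR (2 * s - 1) * (C.1 - B.1),
   A.2 + clampR (2 * s) * (B.2 - A.2) + clampR (2 * s - 1) * (C.2 - B.2)).

Lemma cont_gamma2 A B C : continuous (gamma2 A B C).
Proof.
have cid : continuous (fun s : R => s) by move=> x; exact: cvg_id.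
have c1 : continuous (fun s : R => clampR (2 * s)).
  by apply: cont_comp cont_clampR; apply: cont_mul => //; exact: cont_const.
have c2 : continuous (fun s : R => clampR (2 * s - 1)).
  apply: cont_comp cont_clampR; apply: cont_add; last exact: cont_const.
  by apply: cont_mul => //; exact: cont_const.
by apply: cont_pair; (apply: cont_add; [apply: cont_add|]; 
  [exact: cont_const | apply: cont_mul => //; exact: cont_const
   | apply: cont_mul => //; exact: cont_const]).
Qed.

Definition seg2 (Phi : R * R -> X) (hP : continuous Phi) A B C := PP hP (@cont_gamma2 A B C).

Lemma lerp0 A B : lerp A B 0 = A.
Proof. by case: A => a1 a2; rewrite /lerp /= !mul0r !addr0. Qed.

Lemma lerp1 A B : lerp A B 1 = B.
Proof. by case: A => a1 a2; case: B => b1 b2; rewrite /lerp /= !mul1r !subrKC. Qed.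

Lemma lerpAA A t : lerp A A t = A.
Proof. by case: A => a1 a2; rewrite /lerp /= !subrr !mulr0 !addr0. Qed.

Lemma clampR_le0 x : x <= 0 -> clampR x = 0.
Proof.
move=> h; rewrite /clampR.
have -> : Num.max x 0 = 0 by rewrite max_r.
by rewrite min_l // ler01.
Qed.

Lemma clampR_ge1 x : 1 <= x -> clampR x = 1.
Proof.
move=> h; rewrite /clampR.
have -> : Num.max x 0 = x by rewrite max_l //; apply: le_trans h; exact: ler01.
by rewrite min_r.
Qed.

Lemma seg_concat (Phi : R * R -> X) (hP : continuous Phi) A B C :
  is_concat (seg hP A B) (seg hP B C) (seg2 hP A B C).
Proof.
move=> t s; split => /= e.
- have [s0 s1] : 0 <= sval s /\ sval s <= 1 by have /andP[] := unitI_in s.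
  congr Phi; rewrite /gamma2 /lerp -e clampR_id ?s0 ?s1 // clampR_le0; last lra.
  by rewrite !mul0r !addr0.
- have [s0 s1] : 0 <= sval s /\ sval s <= 1 by have /andP[] := unitI_in s.
  congr Phi; rewrite /gamma2 /lerp -e (@clampR_id (sval s)) ?s0 ?s1 //.
  rewrite (@clampR_ge1 (2 * sval t)); last lra.
  congr (_, _); ring.
Qed.

Lemma seg_end (Phi : R * R -> X) (hP : continuous Phi) A B C : seg hP A B I1 = seg hP B C I0.
Proof. by rewrite /= lerp1 lerp0. Qed.

Lemma PP_homotopy (Phi : R * R -> X) (hP : continuous Phi) (g1 : R -> R * R)
  (h1 : continuous g1) (g2 : R -> R * R) (h2 : continuous g2) : g1 0 = g2 0 -> g1 1 = g2 1 ->
  exists H, is_rel_homotopy (PP hP h1) (PP hP h2) H /\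
    forall z, exists s t, (0 <= s <= 1) /\ (0 <= t <= 1) /\
      H z = Phi (lerp (g1 s) (g2 s) t).
Proof.
move=> e0 e1.
exists (fun z : unitI * unitI => Phi (lerp (g1 (sval z.1)) (g2 (sval z.1)) (sval z.2))).
split; last first.
  by case=> s t; exists (sval s), (sval t); split; [exact: unitI_in|split; [exact: unitI_in|]].
split.
- apply: cont_comp hP; apply: cont_lerp3.
  + apply: cont_comp h1; apply: cont_comp cont_sval; exact: cont_fst.
  + apply: cont_comp h2; apply: cont_comp cont_sval; exact: cont_fst.
  + apply: cont_comp cont_sval; exact: cont_snd.
- by move=> s /=; rewrite lerp0.
- by move=> s /=; rewrite lerp1.
- by move=> t /=; rewrite -e0 -e1 !lerpAA.
Qed.

End Paths.


Section GProd.
Variable G : groupType.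
Local Open Scope group_scope.

Fixpoint gprod (n : nat) (F : nat -> G) : G :=
  if n is k.+1 then gprod k F * F k else 1.

Lemma gprod_ext n F F' : (forall i, (i < n)%N -> F i = F' i) -> gprod n F = gprod n F'.
Proof.
elim: n => //= n IH h; rewrite IH ?h // => i hi; apply: h; exact: ltnW.
Qed.

Lemma gprod_add n m F : gprod (n + m) F = gprod n F * gprod m (fun k => F (n + k)%N).
Proof.
elim: m => [|m IH] /=; first by rewrite addn0 mulg1.
by rewrite addnS /= IH mulgA.
Qed.

Lemma gprod_mul n m F :
  gprod (n * m) F = gprod n (fun i => gprod m (fun k => F (i * m + k)%N)).
Proof.
elim: n => [|n IH] /=; first by rewrite ?mul0n.
by rewrite mulSn addnC gprod_add IH.
Qed.

Lemma gprod1 n F : (forall i, (i < n)%N -> F i = 1) -> gprod n F = 1.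
Proof.
elim: n => //= n IH h; rewrite IH ?h ?mulg1 // => i hi; apply: h; exact: ltnW.
Qed.

End GProd.

Ltac nz := repeat (apply/andP; split); apply: lt0r_neq0;
  first [apply: ltr_wpDr | apply: ltr_pwDr | idtac]; rewrite ?ler0n ?ltr0n //.

Section Sub.
Local Open Scope classical_set_scope.
Local Open Scope ring_scope.
Notation R := Rdefinitions.R.
Variables (X : topologicalType) (G : groupType).
Variables (Phi : R * R -> X) (hP : continuous Phi).

Definition pt (A B : R * R) (n i : nat) : R * R := lerp A B (i%:R / n%:R).

Definition Vs (F : tpath X -> G) A B n :=
  gprod n (fun i => F (seg hP (pt A B n i) (pt A B n i.+1))).

Definition splitF (F : tpath X -> G) (Good : R * R -> R * R -> Prop) :=
  forall A B l, Good A B -> 0 <= l <= 1 ->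
    F (seg hP A B) = (F (seg hP A (lerp A B l)) * F (seg hP (lerp A B l) B))%g.

Definition hered (Good : R * R -> R * R -> Prop) :=
  forall A B a b, Good A B -> 0 <= a <= 1 -> 0 <= b <= 1 ->
    Good (lerp A B a) (lerp A B b).

Definition fineS (Good : R * R -> R * R -> Prop) A B n :=
  (0 < n)%N /\ forall i, (i < n)%N -> Good (pt A B n i) (pt A B n i.+1).

Lemma lerp_comp A B a b t :
  lerp (lerp A B a) (lerp A B b) t = lerp A B (a + t * (b - a)).
Proof. rewrite /lerp /=; congr (_, _); ring. Qed.

Lemma lerp_sub A B a t : lerp A (lerp A B a) t = lerp A B (t * a).
Proof. rewrite /lerp /=; congr (_, _); ring. Qed.

Lemma natr_neq0 (n : nat) : (n.+1%:R : R) != 0.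
Proof. by rewrite pnatr_eq0. Qed.

Lemma subdiv F Good : splitF F Good -> hered Good ->
  forall n A B, Good A B -> F (seg hP A B) = Vs F A B n.+1.
Proof.
move=> sF hG; elim=> [|n IH] A B gAB.
  rewrite /Vs /= /pt mul0r divr1 lerp0 lerp1; by rewrite mul1g.
pose l : R := n.+1%:R / n.+2%:R.
have l01 : 0 <= l <= 1.
  rewrite /l divr_ge0 ?ler0n //= ler_pdivrMr ?ltr0Sn // mul1r ler_nat; done.
rewrite (sF A B l) //.
have gAC : Good A (lerp A B l).
  by have := hG A B 0 l gAB; rewrite lerp0; apply => //; rewrite lexx ler01.
rewrite (IH _ _ gAC) /Vs [in RHS]/=.
congr (_ * _)%g.
  apply: gprod_ext => i _; congr F; congr seg; rewrite /pt lerp_sub; congr lerp.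
    by rewrite /l; field; nz.
  by rewrite /l; field; nz.
congr F; congr seg; rewrite /pt.
by rewrite divff ?natr_neq0 // lerp1.
Qed.

Lemma pt_refine A B n m i k : (0 < n)%N -> (0 < m)%N ->
  pt A B (n * m) (i * m + k) = lerp (pt A B n i) (pt A B n i.+1) (k%:R / m%:R).
Proof.
case: n => // n _; case: m => // m _.
rewrite /pt lerp_comp; congr lerp.
rewrite natrD !natrM -(addn1 i) natrD; field; nz.
Qed.

Lemma div01 (k m : nat) : (k <= m)%N -> (0 < m)%N -> 0 <= (k%:R / m%:R : R) <= 1.
Proof.
move=> km m0; rewrite divr_ge0 ?ler0n //= ler_pdivrMr ?ltr0n // mul1r ler_nat //.
Qed.

Lemma refine F Good : splitF F Good -> hered Good ->
  forall A B n m, fineS Good A B n -> (0 < m)%N -> Vs F A B (n * m) = Vs F A B n.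
Proof.
move=> sF hG A B n m [n0 fn] m0.
rewrite /Vs gprod_mul; apply: gprod_ext => i hi.
case: m m0 => // m _.
rewrite (subdiv sF hG m (fn i hi)) /Vs; apply: gprod_ext => k _.
congr F; congr seg; first by rewrite pt_refine.
by rewrite -addnS pt_refine.
Qed.

Lemma fine_mul Good : hered Good ->
  forall A B n m, fineS Good A B n -> (0 < m)%N -> fineS Good A B (n * m).
Proof.
move=> hG A B n m [n0 fn] m0; split; first by rewrite muln_gt0 n0.
move=> j hj.
have ej : j = (j %/ m * m + j %% m)%N by rewrite -divn_eq.
have him : (j %/ m < n)%N by rewrite ltn_divLR.
have km : (j %% m < m)%N by rewrite ltn_mod.
rewrite ej -addnS !pt_refine //.
apply: hG; first exact: fn.
  apply: div01 => //; exact: ltnW.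
exact: div01.
Qed.

Lemma fine_unique F Good : splitF F Good -> hered Good ->
  forall A B n1 n2, fineS Good A B n1 -> fineS Good A B n2 -> Vs F A B n1 = Vs F A B n2.
Proof.
move=> sF hG A B n1 n2 f1 f2.
rewrite -(refine sF hG f1 (proj1 f2)) mulnC (refine sF hG f2 (proj1 f1)) //.
Qed.

End Sub.


Section W.
Local Open Scope classical_set_scope.
Local Open Scope ring_scope.
Notation R := Rdefinitions.R.
Variables (X : topologicalType) (cov : set (set X)) (Y : set X) (G : groupType).

Lemma conv01 (a b t : R) : 0 <= a <= 1 -> 0 <= b <= 1 -> 0 <= t <= 1 ->
  0 <= a + t * (b - a) <= 1.
Proof. move=> /andP[? ?] /andP[? ?] /andP[? ?]; apply/andP; split; nra. Qed.

Definition wext (w : spath cov -> G) (p : tpath X) : G :=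
  match pselect (short_path cov p) with
  | left h => w (exist _ p h)
  | right _ => 1%g
  end.

Lemma wextE w (sp : spath cov) : wext w (sval sp) = w sp.
Proof.
case: sp => p h; rewrite /wext /=; case: pselect => h' //.
by have -> : h' = h by exact: Prop_irrelevance.
Qed.

Lemma wext_short w p (h : short_path cov p) : wext w p = w (exist _ p h).
Proof. by rewrite -(wextE w (exist _ p h)). Qed.

Lemma wext_homot w : short_cocycle Y w -> forall p q,
  short_path cov p -> short_path cov q -> short_homotopic cov p q -> wext w p = wext w q.
Proof.
move=> [_ hh _] p q sp sq hpq; rewrite (wext_short w sp) (wext_short w sq).
exact: hh.
Qed.

Lemma wext_concat w : short_cocycle Y w -> forall p q r,
  short_path cov p -> short_path cov q -> short_path cov r ->
  p I1 = q I0 -> is_concat p q r -> wext w r = (wext w p * wext w q)%g.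
Proof.
move=> [_ _ hc] p q r sp sq sr e c.
rewrite (wext_short w sp) (wext_short w sq) (wext_short w sr).
exact: (hc (exist _ p sp) (exist _ q sq) (exist _ r sr)).
Qed.

Lemma const_concat (p : tpath X) x : (forall t, p t = x) -> is_concat p p p.
Proof. by move=> h t s; split => _; rewrite !h. Qed.

Lemma wext_const w : short_cocycle Y w -> open_cover cov ->
  forall (p : tpath X) x, (forall t, p t = x) -> wext w p = 1%g.
Proof.
move=> hw [_ hc] p x hp.
have sp : short_path cov p.
  by have [U [cU Ux]] := hc x; exists U; split => // t; rewrite hp.
have := wext_concat hw sp sp sp _ (const_concat hp).
rewrite !hp => /(_ erefl) e.
by apply: (@mulgI _ (wext w p)); rewrite mulg1 -e.
Qed.

Lemma cocycle_const (u : tpath X -> G) : cocycle Y u ->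
  forall (p : tpath X) x, (forall t, p t = x) -> u p = 1%g.
Proof.
move=> [_ _ hc] p x hp.
have := hc p p p _ (const_concat hp); rewrite !hp => /(_ erefl) e.
by apply: (@mulgI _ (u p)); rewrite mulg1 -e.
Qed.

Variables (Phi : R * R -> X) (hP : continuous Phi).

Definition GoodU (U : set X) A B := forall r, 0 <= r <= 1 -> U (Phi (lerp A B r)).
Definition Good A B := exists U, cov U /\ GoodU U A B.

Lemma hered_Good : hered Good.
Proof.
move=> A B a b [U [cU hU]] ha hb; exists U; split => // r hr.
rewrite lerp_comp; apply: hU; exact: conv01.
Qed.

Lemma hered_True : hered (fun _ _ : R * R => True).
Proof. by []. Qed.

Lemma Good_short A B : Good A B -> short_path cov (seg hP A B).
Proof. move=> [U [cU hU]]; exists U; split => // t /=; apply: hU; exact: unitI_in. Qed.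

Definition phi (l s : R) := clampR (2 * s) * l + clampR (2 * s - 1) * (1 - l).

Lemma gamma2_lerp A B l s : gamma2 A (lerp A B l) B s = lerp A B (phi l s).
Proof. rewrite /gamma2 /lerp /phi /=; congr (_, _); ring. Qed.

Lemma phi01 l s : 0 <= l <= 1 -> 0 <= phi l s <= 1.
Proof.
move=> /andP[l0 l1]; rewrite /phi.
have /andP[a0 a1] := clampR_in (2 * s).
have /andP[b0 b1] := clampR_in (2 * s - 1).
apply/andP; split; nra.
Qed.

Lemma seg_split_homotopy A B l : 0 <= l <= 1 ->
  exists H, is_rel_homotopy (seg hP A B) (seg2 hP A (lerp A B l) B) H /\
    forall z, exists r, 0 <= r <= 1 /\ H z = Phi (lerp A B r).
Proof.
move=> l01.
have e0 : lerp A B 0 = gamma2 A (lerp A B l) B 0.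
  rewrite gamma2_lerp; congr lerp; rewrite /phi (@clampR_le0 (2 * 0)) ?(@clampR_le0 (2 * 0 - 1)); lra.
have e1 : lerp A B 1 = gamma2 A (lerp A B l) B 1.
  rewrite gamma2_lerp; congr lerp; rewrite /phi (@clampR_ge1 (2 * 1)) ?(@clampR_ge1 (2 * 1 - 1)); lra.
have [H [hH himg]] := @PP_homotopy X Phi hP (lerp A B) (@cont_lerp A B)
   (gamma2 A (lerp A B l) B) (@cont_gamma2 A (lerp A B l) B) e0 e1.
exists H; split => // z.
have [s [t [s01 [t01 ->]]]] := himg z.
exists (s + t * (phi l s - s)); split; last by rewrite gamma2_lerp lerp_comp.
apply: conv01 => //; exact: phi01.
Qed.

Lemma split_wext w : short_cocycle Y w -> splitF hP (wext w) Good.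
Proof.
move=> hw A B l gAB l01.
have [H [hH himg]] := seg_split_homotopy A B l01.
have s1 := Good_short gAB.
have s2 : short_path cov (seg2 hP A (lerp A B l) B).
  case: gAB => U [cU hU]; exists U; split => // t /=.
  rewrite gamma2_lerp; apply: hU; apply: phi01 => //.
have gAC : Good A (lerp A B l).
  by have := @hered_Good A B 0 l gAB; rewrite lerp0; apply => //; rewrite lexx ler01.
have gCB : Good (lerp A B l) B.
  by have := @hered_Good A B l 1 gAB; rewrite lerp1; apply => //; rewrite lexx ler01.
rewrite (wext_homot hw s1 s2); last first.
  case: gAB => U [cU hU]; exists H; split => //; exists U; split => // z.
  by have [r [r01 ->]] := himg z; apply: hU.
apply: (wext_concat hw (Good_short gAC) (Good_short gCB) s2).
  exact: seg_end.
exact: seg_concat.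
Qed.

Lemma split_cocycle (u : tpath X -> G) : cocycle Y u -> splitF hP u (fun _ _ => True).
Proof.
move=> [_ hh hc] A B l _ l01.
have [H [hH _]] := seg_split_homotopy A B l01.
rewrite (hh _ _ (ex_intro _ H hH)).
apply: hc; [exact: seg_end | exact: seg_concat].
Qed.

End W.


Section Ext.
Local Open Scope classical_set_scope.
Local Open Scope ring_scope.
Notation R := Rdefinitions.R.
Variables (X : topologicalType) (cov : set (set X)) (Y : set X) (G : groupType).
Hypothesis hcov : open_cover cov.

Definition PhiP (p : tpath X) : R * R -> X := fun z => p (clamp z.1).
Lemma cont_PhiP (p : tpath X) : continuous (PhiP p).
Proof.
apply: (@cont_comp _ _ _ (fun z : R * R => clamp z.1) p); last exact: pcont.
apply: (@cont_comp _ _ _ (fun z : R * R => z.1) clamp); last exact: cont_clamp.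
exact: cont_fst.
Qed.

Definition Oz : R * R := (0, 0).
Definition Ez : R * R := (1, 0).

Lemma lerpOE l : lerp Oz Ez l = (l, 0).
Proof. by rewrite /lerp /Oz /Ez /=; congr (_, _); ring. Qed.

Lemma piece_pt A B n i s : (0 < n)%N ->
  lerp (pt A B n i) (pt A B n i.+1) s = lerp A B ((i%:R + s) / n%:R).
Proof.
case: n => // n _; rewrite /pt lerp_comp; congr lerp.
rewrite -(addn1 i) natrD; field; nz.
Qed.

Lemma near_pt (a x : R) N : a <= x <= a + N.+2%:R^-1 -> ball a (N.+1%:R^-1) x.
Proof.
move=> /andP[h1 h2]; apply/ballR.
have : N.+2%:R^-1 < N.+1%:R^-1 :> R.
  by rewrite ltf_pV2 ?posrE ?ltr0Sn // ltr_nat.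
rewrite ler0_norm; last lra.
move: h2; set u := N.+2%:R^-1; set v := N.+1%:R^-1 => h2 h3. lra.
Qed.

Lemma pieces_in n i (s : R) : (i < n)%N -> 0 <= s <= 1 ->
  0 <= (i%:R + s) / n%:R <= 1.
Proof.
move=> hi /andP[s0 s1].
have n0 : 0 < n%:R :> R by rewrite ltr0n; apply: leq_ltn_trans hi.
have : (i.+1%:R <= n%:R :> R) by rewrite ler_nat.
rewrite -addn1 natrD => hin.
apply/andP; split.
  by apply: divr_ge0 => //; apply: addr_ge0 => //; exact: ler0n.
by rewrite ler_pdivrMr // mul1r; lra.
Qed.

Lemma fine_exists (p : tpath X) : exists n, fineS (Good cov (PhiP p)) Oz Ez n.
Proof.
have [N hN] := lebesgue (@cont_PhiP p) hcov.
exists N.+2; split => // i hi.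
have sq : (`[0%R, 1%R] `*` `[0%R, 1%R]) (pt Oz Ez N.+2 i).
  rewrite /pt lerpOE; split => /=; rewrite in_itv /=.
    by have := @pieces_in N.+2 i 0 hi; rewrite addr0; apply; rewrite lexx ler01.
  by rewrite lexx ler01.
have [U [cU hU]] := hN (pt Oz Ez N.+2 i) sq.
exists U; split => // r r01; apply: hU.
rewrite piece_pt // /pt !lerpOE; apply/ballRR; split; last first.
  by apply: ballxx; rewrite invr_gt0 ltr0Sn.
apply: near_pt; move: r01 => /andP[r0 r1] /=.
have a0 : 0 < N.+2%:R^-1 :> R by rewrite invr_gt0 ltr0Sn.
move: a0; set a := N.+2%:R^-1 => a0; apply/andP; split; nra.
Qed.

Definition ext (w : spath cov -> G) (p : tpath X) : G :=
  Vs (@cont_PhiP p) (wext w) Oz Ez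
     (xget 0%N [set n | fineS (Good cov (PhiP p)) Oz Ez n]).

Lemma ext_fine w (hw : short_cocycle Y w) (p : tpath X) n :
  fineS (Good cov (PhiP p)) Oz Ez n -> ext w p = Vs (@cont_PhiP p) (wext w) Oz Ez n.
Proof.
move=> fn; rewrite /ext.
apply: (fine_unique (split_wext (@cont_PhiP p) hw) (@hered_Good X cov (PhiP p))) => //.
exact: (xgetPex 0%N (fine_exists p)).
Qed.

Lemma seg_OE (p : tpath X) : seg (@cont_PhiP p) Oz Ez = p.
Proof.
apply: tpath_ext => t /=; rewrite /PhiP lerpOE /=; by rewrite clamp_sval.
Qed.

Lemma seg1_OE (p : tpath X) : seg (@cont_PhiP p) (pt Oz Ez 1 0) (pt Oz Ez 1 1) = p.
Proof.
by rewrite /pt mul0r divr1 lerp0 lerp1 seg_OE.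
Qed.

Lemma ext_restr w (hw : short_cocycle Y w) (sp : spath cov) : ext w (sval sp) = w sp.
Proof.
case: sp => p hp /=.
have f1 : fineS (Good cov (PhiP p)) Oz Ez 1.
  split => // i; rewrite ltnS leqn0 => /eqP ->.
  case: hp => U [cU hU]; exists U; split => // r _; exact: hU.
rewrite (ext_fine hw f1) /Vs /= mul1g seg1_OE.
exact: wext_short.
Qed.

Lemma ext_Y w (hw : short_cocycle Y w) (p : tpath X) : (forall t, Y (p t)) -> ext w p = 1%g.
Proof.
move=> hY; have [n fn] := fine_exists p.
rewrite (ext_fine hw fn) /Vs; apply: gprod1 => i hi.
rewrite (wext_short w (Good_short (@cont_PhiP p) (proj2 fn i hi))).
case: hw => hwY _ _; apply: hwY => t /=; exact: hY.
Qed.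

Lemma restr_inj (u v : tpath X -> G) : cocycle Y u -> cocycle Y v ->
  (forall sp : spath cov, u (sval sp) = v (sval sp)) -> u = v.
Proof.
move=> hu hv huv; apply: funext => p.
have [n [n0 fn]] := fine_exists p.
case: n n0 fn => // m _ fn.
rewrite -(seg_OE p) (subdiv (split_cocycle (@cont_PhiP p) hu) hered_True m I).
rewrite (subdiv (split_cocycle (@cont_PhiP p) hv) hered_True m I).
rewrite /Vs; apply: gprod_ext => i hi.
exact: (huv (exist _ _ (Good_short (@cont_PhiP p) (fn i hi)))).
Qed.

Lemma concat_l (p q r : tpath X) : is_concat p q r ->
  forall x, 0 <= x <= 1 -> r (clamp (x / 2)) = p (clamp x).
Proof.
move=> c x /andP[x0 x1]; have [h _] := c (clamp (x / 2)) (clamp x); apply: h => /=.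
rewrite !clampR_id; try (apply/andP; split; lra); by field.
Qed.

Lemma concat_r (p q r : tpath X) : is_concat p q r ->
  forall x, 0 <= x <= 1 -> r (clamp ((x + 1) / 2)) = q (clamp x).
Proof.
move=> c x /andP[x0 x1]; have [_ h] := c (clamp ((x + 1) / 2)) (clamp x); apply: h => /=.
rewrite !clampR_id; try (apply/andP; split; lra); by field.
Qed.

Lemma ext_concat w (hw : short_cocycle Y w) (p q r : tpath X) :
  p I1 = q I0 -> is_concat p q r -> ext w r = (ext w p * ext w q)%g.
Proof.
move=> e c.
have [n1 f1] := fine_exists p; have [n2 f2] := fine_exists q; have [n3 f3] := fine_exists r.
have p1 := proj1 f1; have p2 := proj1 f2; have p3 := proj1 f3.
pose k := (n1 * n2 * n3)%N.
have k0 : (0 < k)%N by rewrite /k !muln_gt0 p1 p2 p3.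
have hG := fun (Phi : R * R -> X) => @hered_Good X cov Phi.
have fp : fineS (Good cov (PhiP p)) Oz Ez k.
  by rewrite /k -mulnA; apply: fine_mul => //; rewrite muln_gt0 p2 p3.
have fq : fineS (Good cov (PhiP q)) Oz Ez k.
  by rewrite /k (mulnC n1) -mulnA; apply: fine_mul => //; rewrite muln_gt0 p1 p3.
have fr : fineS (Good cov (PhiP r)) Oz Ez (k + k).
  have -> : (k + k = n3 * (n1 * n2 * 2))%N by rewrite /k addnn -muln2 (mulnC _ n3) !mulnA.
  by apply: fine_mul => //; rewrite !muln_gt0 p1 p2.
have kR : (k%:R : R) != 0 by rewrite pnatr_eq0 -lt0n.
rewrite (ext_fine hw fr) (ext_fine hw fp) (ext_fine hw fq) /Vs gprod_add.
have kk : (0 < k + k)%N by rewrite addn_gt0 k0.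
have kk0 : (k%:R + k%:R : R) != 0 by rewrite -natrD pnatr_eq0 -lt0n.
congr (_ * _)%g; apply: gprod_ext => i hi; congr wext; apply: tpath_ext => t;
  rewrite /= /PhiP !piece_pt // !lerpOE /=.
- have -> : (i%:R + sval t) / (k + k)%:R = ((i%:R + sval t) / k%:R) / 2.
    rewrite natrD; field; rewrite kR /=; exact: kk0.
  apply: concat_l c _ _; apply: pieces_in => //; exact: unitI_in.
- have -> : ((k + i)%:R + sval t) / (k + k)%:R = ((i%:R + sval t) / k%:R + 1) / 2.
    rewrite !natrD; field; rewrite kR /=; exact: kk0.
  apply: concat_r c _ _; apply: pieces_in => //; exact: unitI_in.
Qed.

End Ext.


Lemma telescope (G : groupType) (b t c : nat -> G) n :
  (forall i, (i < n)%N -> (b i * c i.+1 = c i * t i)%g) -> c 0%N = 1%g -> c n = 1%g ->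
  gprod n b = gprod n t.
Proof.
move=> h c0 cn.
have key : forall k, (k <= n)%N -> (c 0%N * gprod k t = gprod k b * c k)%g.
  elim=> [|k IH] hk /=; first by rewrite mulg1 mul1g.
  rewrite mulgA IH ?(ltnW hk) // -mulgA -h // mulgA //.
have := key n (leqnn n); rewrite c0 cn mul1g mulg1 => ->; done.
Qed.

Section Grid.
Local Open Scope classical_set_scope.
Local Open Scope ring_scope.
Notation R := Rdefinitions.R.
Variables (X : topologicalType) (cov : set (set X)) (Y : set X) (G : groupType).
Hypothesis hcov : open_cover cov.

Lemma clamp0 : clamp 0 = I0.
Proof. by apply: eq_exist; rewrite /= clampR_id // lexx ler01. Qed.

Lemma clamp1 : clamp 1 = I1.
Proof. by apply: eq_exist; rewrite /= clampR_id // lexx ler01. Qed.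

Lemma gamma2_cases A B C s :
  gamma2 A B C s = lerp A B (clampR (2 * s)) \/
  gamma2 A B C s = lerp B C (clampR (2 * s - 1)).
Proof.
case: (lerP (2 * s) 1) => h.
  left; rewrite /gamma2 /lerp (@clampR_le0 (2 * s - 1)); last lra.
  congr (_, _); ring.
right; rewrite /gamma2 /lerp (@clampR_ge1 (2 * s)); last lra.
congr (_, _); ring.
Qed.

Lemma gamma2_0 A B C : gamma2 A B C 0 = A.
Proof.
have h1 : clampR (2 * 0) = 0 by apply: clampR_le0; lra.
have h2 : clampR (2 * 0 - 1) = 0 by apply: clampR_le0; lra.
rewrite /gamma2 h1 h2.
by case: A => a b /=; congr (_, _); ring.
Qed.

Lemma gamma2_1 A B C : gamma2 A B C 1 = C.
Proof.
have h1 : clampR (2 * 1) = 1 by apply: clampR_ge1; lra.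
have h2 : clampR (2 * 1 - 1) = 1 by apply: clampR_ge1; lra.
rewrite /gamma2 h1 h2.
by case: A => ? ?; case: B => ? ?; case: C => a b /=; congr (_, _); ring.
Qed.

Lemma conv_gen (lo hi a b t : R) : lo <= a <= hi -> lo <= b <= hi -> 0 <= t <= 1 ->
  lo <= a + t * (b - a) <= hi.
Proof. move=> /andP[? ?] /andP[? ?] /andP[? ?]; apply/andP; split; nra. Qed.

Definition incell (a b d : R) (z : R * R) := a <= z.1 <= a + d /\ b <= z.2 <= b + d.

Lemma incell_lerp a b d z1 z2 t : incell a b d z1 -> incell a b d z2 -> 0 <= t <= 1 ->
  incell a b d (lerp z1 z2 t).
Proof. by move=> [h1 h2] [h3 h4] ht; split; apply: conv_gen. Qed.

Lemma incell_gamma2 a b d A B C s : incell a b d A -> incell a b d B -> incell a b d C ->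
  incell a b d (gamma2 A B C s).
Proof.
move=> hA hB hC; case: (gamma2_cases A B C s) => ->; apply: incell_lerp => //;
  exact: clampR_in.
Qed.

Variables (p q : tpath X) (Hm : unitI * unitI -> X).
Hypothesis hH : is_rel_homotopy p q Hm.
Variable w : spath cov -> G.
Hypothesis hw : short_cocycle Y w.

Definition PhiH (z : R * R) := Hm (clamp z.1, clamp z.2).

Lemma cont_PhiH : continuous PhiH.
Proof.
have [cH _ _ _] := hH.
apply: (@cont_comp _ _ _ (fun z : R * R => (clamp z.1, clamp z.2)) Hm) => //.
apply: cont_pair.
  apply: (@cont_comp _ _ _ (fun z : R * R => z.1) clamp); [exact: cont_fst|exact: cont_clamp].
apply: (@cont_comp _ _ _ (fun z : R * R => z.2) clamp); [exact: cont_snd|exact: cont_clamp].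
Qed.

Lemma ext_homot : ext w p = ext w q.
Proof.
have [cH h0 h1 hend] := hH.
have [N hN] := lebesgue cont_PhiH hcov.
pose n := N.+2.
pose d : R := n%:R^-1.
pose g (i j : nat) : R * R := (i%:R / n%:R, j%:R / n%:R).
have nR : (n%:R : R) != 0 by rewrite pnatr_eq0.
have d0 : 0 < d by rewrite invr_gt0 ltr0Sn.
have step : forall i : nat, (i.+1%:R / n%:R : R) = i%:R / n%:R + d.
  by move=> i; rewrite /d -addn1 natrD mulrDl mul1r.
have b0 : forall i : nat, (i%:R / n%:R : R) <= i%:R / n%:R <= i%:R / n%:R + d.
  by move=> i; rewrite lexx /= lerDl ltW.
have b1 : forall i : nat, (i%:R / n%:R : R) <= i.+1%:R / n%:R <= i%:R / n%:R + d.
  by move=> i; rewrite step lexx lerDl ltW.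
pose cell i j := incell (i%:R / n%:R) (j%:R / n%:R) d.
have cellU : forall i j, (i < n)%N -> (j < n)%N ->
    exists U, cov U /\ forall z, cell i j z -> U (PhiH z).
  move=> i j hi hj.
  have sq : (`[0%R, 1%R] `*` `[0%R, 1%R]) (g i j).
    split => /=; rewrite in_itv /=.
      by have := @pieces_in n i 0 hi; rewrite addr0; apply; rewrite lexx ler01.
    by have := @pieces_in n j 0 hj; rewrite addr0; apply; rewrite lexx ler01.
  have [U [cU hU]] := hN (g i j) sq.
  exists U; split => // z [z1 z2]; apply: hU; apply/ballRR; split; exact: near_pt.
have c00 : forall i j, cell i j (g i j) by move=> i j; split; [exact: b0|exact: b0].
have c10 : forall i j, cell i j (g i.+1 j) by move=> i j; split; [exact: b1|exact: b0].
have c01 : forall i j, cell i j (g i j.+1) by move=> i j; split; [exact: b0|exact: b1].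
have c11 : forall i j, cell i j (g i.+1 j.+1) by move=> i j; split; [exact: b1|exact: b1].
have goodc : forall i j P Q, (i < n)%N -> (j < n)%N -> cell i j P -> cell i j Q ->
    Good cov PhiH P Q.
  move=> i j P Q hi hj hP hQ; have [U [cU hU]] := cellU i j hi hj.
  by exists U; split => // r hr; apply: hU; apply: incell_lerp.
pose F := wext w.
pose bot i j := seg cont_PhiH (g i j) (g i.+1 j).
pose col i j := seg cont_PhiH (g i j) (g i j.+1).
have cell_eq : forall i j, (i < n)%N -> (j < n)%N ->
    (F (bot i j) * F (col i.+1 j) = F (col i j) * F (bot i j.+1))%g.
  move=> i j hi hj.
  have [U [cU hU]] := cellU i j hi hj.
  have sh : forall P Q, cell i j P -> cell i j Q -> short_path cov (seg cont_PhiH P Q).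
    by move=> P Q hP hQ; apply: Good_short; exact: (goodc i j).
  have s2 : forall B, cell i j B ->
      short_path cov (seg2 cont_PhiH (g i j) B (g i.+1 j.+1)).
    move=> B hB; exists U; split => // t /=; apply: hU; apply: incell_gamma2 => //.
  have eA : F (seg2 cont_PhiH (g i j) (g i.+1 j) (g i.+1 j.+1)) =
      (F (bot i j) * F (col i.+1 j))%g.
    apply: (wext_concat hw (sh _ _ (c00 i j) (c10 i j)) (sh _ _ (c10 i j) (c11 i j))
      (s2 _ (c10 i j))); [exact: seg_end | exact: seg_concat].
  have eB : F (seg2 cont_PhiH (g i j) (g i j.+1) (g i.+1 j.+1)) =
      (F (col i j) * F (bot i j.+1))%g.
    apply: (wext_concat hw (sh _ _ (c00 i j) (c01 i j)) (sh _ _ (c01 i j) (c11 i j))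
      (s2 _ (c01 i j))); [exact: seg_end | exact: seg_concat].
  rewrite -eA -eB; apply: (wext_homot hw (s2 _ (c10 i j)) (s2 _ (c01 i j))).
  have e0 : gamma2 (g i j) (g i.+1 j) (g i.+1 j.+1) 0 = gamma2 (g i j) (g i j.+1) (g i.+1 j.+1) 0.
    by rewrite !gamma2_0.
  have e1 : gamma2 (g i j) (g i.+1 j) (g i.+1 j.+1) 1 = gamma2 (g i j) (g i j.+1) (g i.+1 j.+1) 1.
    by rewrite !gamma2_1.
  have [K [hK himg]] := PP_homotopy cont_PhiH (@cont_gamma2 (g i j) (g i.+1 j) (g i.+1 j.+1))
    (@cont_gamma2 (g i j) (g i j.+1) (g i.+1 j.+1)) e0 e1.
  exists K; split => //; exists U; split => // z.
  have [s [t [s01 [t01 ->]]]] := himg z.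
  apply: hU; apply: incell_lerp => //; apply: incell_gamma2 => //.
have col0 : forall j, F (col 0%N j) = 1%g.
  move=> j; apply: (wext_const hw hcov (x := p I0)) => t.
  have e : (lerp (g 0%N j) (g 0%N j.+1) (sval t)).1 = 0 by rewrite /lerp /g /=; ring.
  rewrite /= /PhiH e clamp0; exact: (hend _).1.
have coln : forall j, F (col n j) = 1%g.
  move=> j; apply: (wext_const hw hcov (x := p I1)) => t.
  have e : (lerp (g n j) (g n j.+1) (sval t)).1 = 1.
    by rewrite /lerp /g /= divff // subrr mulr0 addr0.
  rewrite /= /PhiH e clamp1; exact: (hend _).2.
have row : forall j, (j < n)%N ->
    gprod n (fun i => F (bot i j)) = gprod n (fun i => F (bot i j.+1)).
  move=> j hj.
  apply: (@telescope G (fun i => F (bot i j)) (fun i => F (bot i j.+1)) (fun i => F (col i j)) n).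
  - by move=> i hi; exact: cell_eq.
  - exact: col0.
  - exact: coln.
have rows : forall j, (j <= n)%N ->
    gprod n (fun i => F (bot i 0%N)) = gprod n (fun i => F (bot i j)).
  elim=> // j IH hj; rewrite IH ?(ltnW hj) //; exact: row.
have row0 : forall i r, PhiP p (lerp (pt Oz Ez n i) (pt Oz Ez n i.+1) r) =
    PhiH (lerp (g i 0%N) (g i.+1 0%N) r).
  move=> i r.
  have e : (lerp (g i 0%N) (g i.+1 0%N) r).2 = 0 by rewrite /lerp /g /=; ring.
  rewrite /PhiH e clamp0 h0 /PhiP; congr (p (clamp _)).
  by rewrite /lerp /pt /g /Oz /Ez /=; ring.
have rown : forall i r, PhiP q (lerp (pt Oz Ez n i) (pt Oz Ez n i.+1) r) =
    PhiH (lerp (g i n) (g i.+1 n) r).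
  move=> i r.
  have e : (lerp (g i n) (g i.+1 n) r).2 = 1.
    by rewrite /lerp /g /= divff // subrr mulr0 addr0.
  rewrite /PhiH e clamp1 h1 /PhiP; congr (q (clamp _)).
  by rewrite /lerp /pt /g /Oz /Ez /=; ring.
have fp : fineS (Good cov (PhiP p)) Oz Ez n.
  split => // i hi; have [U [cU hU]] := cellU i 0%N hi isT.
  exists U; split => // r hr; rewrite row0; apply: hU.
  apply: incell_lerp; [exact: c00 | exact: c10 | exact: hr].
have fq : fineS (Good cov (PhiP q)) Oz Ez n.
  split => // i hi; have [U [cU hU]] := cellU i (n.-1) hi (ltnSn _).
  exists U; split => // r hr; rewrite rown; apply: hU.
  apply: incell_lerp; [exact: (c01 i N.+1) | exact: (c11 i N.+1) | exact: hr].
rewrite (ext_fine hcov hw fp) (ext_fine hcov hw fq) /Vs.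
transitivity (gprod n (fun i => F (bot i 0%N))).
  apply: gprod_ext => i _; congr wext; apply: tpath_ext => t; exact: row0.
rewrite (rows n (leqnn n)).
apply: gprod_ext => i _; congr wext; apply: tpath_ext => t; symmetry; exact: rown.
Qed.

End Grid.


Section Final.
Local Open Scope classical_set_scope.
Variables (X : topologicalType) (cov : set (set X)) (Y : set X) (G : groupType).

Lemma act0_cocycle (c : X -> G) (u : tpath X -> G) :
  cochain0 Y c -> cocycle Y u -> cocycle Y (act0 c u).
Proof.
move=> hc [hY hh hcc]; split.
- move=> p hp; rewrite /act0 hY // !hc // ?invg1 ?mulg1 //.
- move=> p q [H [cH h0 h1 hend]].
  have e0 : q I0 = p I0 by rewrite -h1 (hend I1).1.
  have e1 : q I1 = p I1 by rewrite -h1 (hend I1).2.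
  by rewrite /act0 e0 e1 (hh p q (ex_intro _ H (And4 cH h0 h1 hend))).
- move=> p q r e cc.
  have r0 : r I0 = p I0.
    have [h _] := cc I0 I0; apply: h => /=; rewrite GRing.mulr0 //.
  have r1 : r I1 = q I1.
    have [_ h] := cc I1 I1; apply: h => /=; lra.
  rewrite /act0 r0 r1 (hcc p q r e cc) e.
  by rewrite !mulgA mulgVK.
Qed.

End Final.

Unset Implicit Arguments.
Set Strict Implicit.
Local Open Scope classical_set_scope.

Theorem theorem3p1 (X : topologicalType) (Y : set X) (G : groupType)
    (cov : set (set X)) :
  path_connected X -> open_cover cov ->
  ((forall u : tpath X -> G, cocycle Y u -> short_cocycle Y (restr_short cov u)) /\
   (forall u v : tpath X -> G, cocycle Y u -> cocycle Y v ->
      restr_short cov u = restr_short cov v -> u = v) /\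
   (forall w : spath cov -> G, short_cocycle Y w ->
      exists u : tpath X -> G, cocycle Y u /\ restr_short cov u = w)) /\
  ((forall u v : tpath X -> G, cocycle Y u -> cocycle Y v ->
      cohomologous Y u v -> short_cohomologous Y (restr_short cov u) (restr_short cov v)) /\
   (forall u v : tpath X -> G, cocycle Y u -> cocycle Y v ->
      short_cohomologous Y (restr_short cov u) (restr_short cov v) -> cohomologous Y u v) /\
   (forall w : spath cov -> G, short_cocycle Y w ->
      exists u : tpath X -> G, cocycle Y u /\
        short_cohomologous Y (restr_short cov u) w)).
Proof.
move=> _ hcov.
have restr_ok : forall u : tpath X -> G, cocycle Y u -> short_cocycle Y (restr_short cov u).
  move=> u [hY hh hc]; split.
  - by move=> p hp; exact: hY.
  - by move=> p q [H [hH _]]; apply: hh; exists H.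
  - by move=> p q r e c; exact: hc.
have inj : forall u v : tpath X -> G, cocycle Y u -> cocycle Y v ->
    restr_short cov u = restr_short cov v -> u = v.
  move=> u v hu hv e; apply: (restr_inj hcov hu hv) => sp.
  exact: (congr1 (fun f => f sp) e).
have ext_coc : forall w : spath cov -> G, short_cocycle Y w -> cocycle Y (ext w).
  move=> w hw; split.
  - by move=> p hp; exact: (ext_Y hcov hw).
  - by move=> p q [H hH]; exact: (ext_homot hcov hH hw).
  - by move=> p q r e c; exact: (ext_concat hcov hw e c).
have ext_r : forall w : spath cov -> G, short_cocycle Y w -> restr_short cov (ext w) = w.
  by move=> w hw; apply: funext => sp; rewrite /restr_short (ext_restr hcov hw).
split; [split; [exact: restr_ok | split; [exact: inj |]] | split; [|split]].
- by move=> w hw; exists (ext w); split; [exact: ext_coc | exact: ext_r].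
- move=> u v hu hv [c [hc ->]]; exists c; split => //.
- move=> u v hu hv [c [hc e]]; exists c; split => //.
  apply: (inj v (act0 c u) hv (@act0_cocycle X Y G c u hc hu)).
  by rewrite e.
- move=> w hw; exists (ext w); split; first exact: ext_coc.
  exists (fun _ => 1%g); split => //.
  rewrite (ext_r w hw); apply: funext => sp.
  by rewrite /act0_short mul1g invg1 mulg1.
Qed.
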